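(* There is an absolute constant $C>0$ such that for all $k\ge 2$, $\gamma\in(0,1]$, $\varepsilon\in(0,1]$ and $n\ge C\,k^{3/2}/(\gamma^2\varepsilon^2)$ the following test is a uniformity tester over $[k]$ with distance parameter $\gamma$: each of the $n$ users applies $\varepsilon$-RAPPOR to its sample $X_j$ and sends $b_j\in\{0,1\}^k$; the curator computes $N_x=\sum_{j}\mathbf 1\{b_{jx}=1\}$, $\lambda=\alpha_R/k+\beta_R$ and $T=\sum_{x\in[k]}\big((N_x-(n-1)\lambda)^2-N_x\big)+k(n-1)\lambda^2$, and outputs ``uniform'' if $T<n(n-1)\alpha_R^2\gamma^2/k$ and ``not uniform'' otherwise.
   Context: $\Delta([k])$ is the set of probability distributions on $[k]=\{1,\dots,k\}$, $u$ the uniform distribution on $[k]$, $d_{TV}(p,q)=\frac12\|p-q\|_1$. Users hold i.i.d. samples $X_1,\dots,X_n$ from an unknown $p\in\Delta([k])$. The $\varepsilon$-RAPPOR mechanism maps $x\in[k]$ to a random vector $b\in\{0,1\}^k$ obtained from the one-hot vector $e_x$ by flipping each coordinate independently with probability $\beta_R=1/(e^{\varepsilon/2}+1)$; $\alpha_R=(e^{\varepsilon/2}-1)/(e^{\varepsilon/2}+1)$. A uniformity tester with distance parameter $\gamma$ must, for every $p$, output ``uniform'' with probability at least $2/3$ if $p=u$ and ``not uniform'' with probability at least $2/3$ if $d_{TV}(p,u)>\gamma$. *)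

(* Defs.v *)
From Stdlib Require Import Reals.
From mathcomp Require Import all_boot.

Set Implicit Arguments.
Unset Strict Implicit.

Local Open Scope R_scope.

Definition Rsum {T : finType} (F : T -> R) : R := \big[Rplus/R0]_(i : T) F i.
Definition Rprod {T : finType} (F : T -> R) : R := \big[Rmult/R1]_(i : T) F i.

(* [k] is represented by 'I_k = {0,...,k-1}. *)
Definition is_dist (k : nat) (p : 'I_k -> R) : Prop :=
  (forall x, 0 <= p x) /\ Rsum p = 1.

Definition unif (k : nat) : 'I_k -> R := fun _ => / INR k.

Definition dTV (k : nat) (p q : 'I_k -> R) : R :=
  / 2 * Rsum (fun x => Rabs (p x - q x)).

Definition beta_R (eps : R) : R := / (exp (eps / 2) + 1).
Definition alpha_R (eps : R) : R := (exp (eps / 2) - 1) / (exp (eps / 2) + 1).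

(* Probability that eps-RAPPOR maps x to the bit vector b: each coordinate of
   the one-hot vector e_x is flipped independently with probability beta_R. *)
Definition rappor_prob (k : nat) (eps : R) (x : 'I_k) (b : {ffun 'I_k -> bool}) : R :=
  Rprod (fun y : 'I_k => if b y == (y == x) then 1 - beta_R eps else beta_R eps).

Definition outcome (n k : nat) : finType :=
  ({ffun 'I_n -> 'I_k} * {ffun 'I_n -> {ffun 'I_k -> bool}})%type.

Definition outcome_prob (n k : nat) (eps : R) (p : 'I_k -> R) (o : outcome n k) : R :=
  Rprod (fun j : 'I_n => p (o.1 j) * rappor_prob eps (o.1 j) (o.2 j)).

Definition Ncount (n k : nat) (B : {ffun 'I_n -> {ffun 'I_k -> bool}}) (x : 'I_k) : nat :=
  #|[pred j : 'I_n | B j x]|.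

Definition lambda_R (k : nat) (eps : R) : R := alpha_R eps / INR k + beta_R eps.

Definition statT (n k : nat) (eps : R) (B : {ffun 'I_n -> {ffun 'I_k -> bool}}) : R :=
  Rsum (fun x : 'I_k =>
          (INR (Ncount B x) - (INR n - 1) * lambda_R k eps) ^ 2 - INR (Ncount B x))
  + INR k * (INR n - 1) * (lambda_R k eps) ^ 2.

Definition test_says_uniform (n k : nat) (eps gamma : R)
    (B : {ffun 'I_n -> {ffun 'I_k -> bool}}) : bool :=
  if Rlt_dec (statT eps B) (INR n * (INR n - 1) * (alpha_R eps) ^ 2 * gamma ^ 2 / INR k)
  then true else false.

Definition prob_says_uniform (n k : nat) (eps gamma : R) (p : 'I_k -> R) : R :=
  Rsum (fun o : outcome n k =>
          if test_says_uniform eps gamma o.2 then outcome_prob eps p o else 0).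

Definition prob_says_not_uniform (n k : nat) (eps gamma : R) (p : 'I_k -> R) : R :=
  Rsum (fun o : outcome n k =>
          if test_says_uniform eps gamma o.2 then 0 else outcome_prob eps p o).

Definition is_uniformity_tester (n k : nat) (eps gamma : R) : Prop :=
  forall p : 'I_k -> R, is_dist p ->
    (p = @unif k -> prob_says_uniform n eps gamma p >= 2 / 3) /\
    (dTV p (@unif k) > gamma -> prob_says_not_uniform n eps gamma p >= 2 / 3).

(* Main.v *)
Require Import Defs.
From Stdlib Require Import Reals Lra.
From HB Require Import structures.
From mathcomp Require Import all_boot.
Local Open Scope R_scope.
Lemma RplusA' : associative Rplus. Proof. move=> *; ring. Qed.
Lemma RmultA' : associative Rmult. Proof. move=> *; ring. Qed.
Lemma Rdl : left_distributive Rmult Rplus. Proof. move=> *; ring. Qed.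
Lemma Rdr : right_distributive Rmult Rplus. Proof. move=> *; ring. Qed.
HB.instance Definition _ := Monoid.isComLaw.Build R R0 Rplus RplusA' Rplus_comm Rplus_0_l.
HB.instance Definition _ := Monoid.isComLaw.Build R R1 Rmult RmultA' Rmult_comm Rmult_1_l.
HB.instance Definition _ := Monoid.isMulLaw.Build R R0 Rmult Rmult_0_l Rmult_0_r.
HB.instance Definition _ := Monoid.isAddLaw.Build R Rmult Rplus Rdl Rdr.
Set Implicit Arguments.
Unset Strict Implicit.

Section Gen.
Variable T : finType.
Implicit Types f g : T -> R.

Lemma Rsum_ext f g : (forall i, f i = g i) -> Rsum f = Rsum g.
Proof. move=> H; rewrite /Rsum; apply: eq_bigr => i _; exact: H. Qed.

Lemma Rsum_add f g : Rsum (fun i => f i + g i) = Rsum f + Rsum g.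
Proof. by rewrite /Rsum big_split. Qed.

Lemma Rsum_scal c f : Rsum (fun i => c * f i) = c * Rsum f.
Proof. by rewrite /Rsum big_distrr. Qed.

Lemma Rsum_scalr c f : Rsum (fun i => f i * c) = Rsum f * c.
Proof. by rewrite /Rsum big_distrl. Qed.

Lemma Rsum_opp f : Rsum (fun i => - f i) = - Rsum f.
Proof.
rewrite -(Rsum_ext (f := fun i => (-1) * f i)); last by move=> i; ring.
rewrite Rsum_scal; ring.
Qed.

Lemma Rsum_sub f g : Rsum (fun i => f i - g i) = Rsum f - Rsum g.
Proof. by rewrite /Rminus -Rsum_opp -Rsum_add. Qed.

Lemma Rsum_le f g : (forall i, f i <= g i) -> Rsum f <= Rsum g.
Proof.
move=> H; rewrite /Rsum; apply: (big_ind2 (fun a b => a <= b)).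
- lra.
- move=> *; lra.
- by move=> i _; apply: H.
Qed.

Lemma Rsum_ge0 f : (forall i, 0 <= f i) -> 0 <= Rsum f.
Proof.
move=> H; rewrite /Rsum; apply: (big_ind (fun a => 0 <= a)).
- lra.
- move=> *; lra.
- by move=> i _; apply: H.
Qed.

Lemma Rsum0 : Rsum (fun _ : T => 0) = 0.
Proof. by rewrite /Rsum big1. Qed.

Lemma Rsum_const c : Rsum (fun _ : T => c) = INR #|T| * c.
Proof.
rewrite /Rsum big_const; elim: #|_| => [|m IH]; first (rewrite /=; ring).
rewrite iterS IH S_INR; ring.
Qed.

Lemma Rsum_delta (j : T) f : Rsum (fun i => if i == j then f i else 0) = f j.
Proof.
rewrite /Rsum (bigD1 j) //= eqxx big1; first ring.
by move=> i /negbTE ->.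
Qed.

Lemma Rsum_delta' (j : T) f : Rsum (fun i => if j == i then f i else 0) = f j.
Proof.
rewrite -(Rsum_delta j f); apply: Rsum_ext => i; by rewrite eq_sym.
Qed.

Lemma Rprod_delta (j : T) f : Rprod (fun i => if i == j then f i else 1) = f j.
Proof.
rewrite /Rprod (bigD1 j) //= eqxx big1; first ring.
by move=> i /negbTE ->.
Qed.

Lemma Rprod_split f g : Rprod (fun i => f i * g i) = Rprod f * Rprod g.
Proof. by rewrite /Rprod big_split. Qed.

Lemma Rprod_ext f g : (forall i, f i = g i) -> Rprod f = Rprod g.
Proof. move=> H; rewrite /Rprod; apply: eq_bigr => i _; exact: H. Qed.

Lemma Rprod_zero (j : T) f : f j = 0 -> Rprod f = 0.
Proof. move=> H; rewrite /Rprod (bigD1 j) //= H; ring. Qed.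

Lemma Rprod1 : Rprod (fun _ : T => 1) = 1.
Proof. by rewrite /Rprod big1. Qed.

Lemma Rprod_ge0 f : (forall i, 0 <= f i) -> 0 <= Rprod f.
Proof.
move=> H; rewrite /Rprod; apply: (big_ind (fun a => 0 <= a)).
- lra.
- move=> *; nra.
- by move=> i _; apply: H.
Qed.

Lemma Rprod_two (j l : T) f g : j != l ->
  Rprod (fun i => if i == j then f i else if i == l then g i else 1) = f j * g l.
Proof.
move=> jl; have lj : (l == j) = false by rewrite eq_sym (negbTE jl).
rewrite /Rprod (bigD1 j) //= eqxx (bigD1 l) /=; last by rewrite eq_sym.
rewrite lj eqxx.
rewrite big1; first ring.
by move=> i /andP [/negbTE -> /negbTE ->].
Qed.

End Gen.

Lemma Rsum_swap (T1 T2 : finType) (F : T1 -> T2 -> R) :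
  Rsum (fun i => Rsum (fun j => F i j)) = Rsum (fun j => Rsum (fun i => F i j)).
Proof. by rewrite /Rsum exchange_big. Qed.

Lemma Rsum_pair (T1 T2 : finType) (F : T1 -> T2 -> R) :
  Rsum (fun c : (T1 * T2)%type => F c.1 c.2) = Rsum (fun i => Rsum (fun j => F i j)).
Proof. by rewrite /Rsum pair_bigA. Qed.

Lemma Rprod_sum (I J : finType) (F : I -> J -> R) :
  Rprod (fun i => Rsum (fun j => F i j)) = Rsum (fun f : {ffun I -> J} => Rprod (fun i => F i (f i))).
Proof. by rewrite /Rprod /Rsum bigA_distr_bigA. Qed.

Lemma Rsum_mul (T1 T2 : finType) (f : T1 -> R) (g : T2 -> R) :
  Rsum f * Rsum g = Rsum (fun i => Rsum (fun j => f i * g j)).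
Proof.
rewrite -Rsum_scalr; apply: Rsum_ext => i; by rewrite -Rsum_scal.
Qed.

Definition Ib (b : bool) : R := if b then 1 else 0.

Lemma Ib_sq b : Ib b * Ib b = Ib b.
Proof. case: b => /=; ring. Qed.

Lemma Ib_01 b : 0 <= Ib b <= 1.
Proof. case: b => /=; lra. Qed.

Section Single.
Variable k : nat.
Variable eps : R.
Variable p : 'I_k -> R.

Definition bet := beta_R eps.
Definition alp := alpha_R eps.

Lemma exp_pos_h : 0 < exp (eps / 2) + 1.
Proof. have := exp_pos (eps/2); lra. Qed.

Lemma alpha_beta : alp = 1 - 2 * bet.
Proof.
rewrite /alp /bet /alpha_R /beta_R. have := exp_pos_h. move=> H.
field; lra.
Qed.

Definition Om : finType := ('I_k * {ffun 'I_k -> bool})%type.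
Definition wt (c : Om) : R := p c.1 * rappor_prob eps c.1 c.2.
Definition E1 (g : Om -> R) : R := Rsum (fun c => wt c * g c).

Definition rf (z y : 'I_k) (c : bool) : R := if c == (y == z) then 1 - bet else bet.
Definition rr (z x : 'I_k) : R := if x == z then 1 - bet else bet.

Lemma rf_true z y : rf z y true = rr z y.
Proof. by rewrite /rf /rr; case: (y == z). Qed.

Lemma rf_sum z y : rf z y true + rf z y false = 1.
Proof. rewrite /rf; case: (y == z) => /=; ring. Qed.

Lemma rappor_marg z (H : 'I_k -> bool -> R) :
  Rsum (fun b : {ffun 'I_k -> bool} => rappor_prob eps z b * Rprod (fun y => H y (b y)))
  = Rprod (fun y => rf z y true * H y true + rf z y false * H y false).
Proof.
rewrite (Rsum_ext (g := fun b : {ffun 'I_k -> bool} => Rprod (fun y => rf z y (b y) * H y (b y)))); last first.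
  by move=> b; rewrite Rprod_split.
rewrite -(Rprod_sum (fun y c => rf z y c * H y c)).
apply: Rprod_ext => y; by rewrite /Rsum big_bool.
Qed.

Lemma E1_pairE g : E1 g = Rsum (fun z => Rsum (fun b : {ffun 'I_k -> bool} => wt (z, b) * g (z, b))).
Proof.
rewrite /E1 -(Rsum_pair (fun z b => wt (z, b) * g (z, b))).
by apply: Rsum_ext; case.
Qed.

Lemma E1_marg (H : 'I_k -> 'I_k -> bool -> R) :
  E1 (fun c => Rprod (fun y => H c.1 y (c.2 y))) =
  Rsum (fun z => p z * Rprod (fun y => rf z y true * H z y true + rf z y false * H z y false)).
Proof.
rewrite E1_pairE; apply: Rsum_ext => z.
rewrite -rappor_marg -Rsum_scal; apply: Rsum_ext => b.
rewrite /wt /=; ring.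
Qed.

Lemma E1_one : E1 (fun _ => 1) = Rsum p.
Proof.
have -> : E1 (fun _ => 1) = E1 (fun c => Rprod (fun y => (fun _ _ _ => 1) c.1 y (c.2 y))) by rewrite Rprod1.
rewrite (E1_marg (fun _ _ _ => 1)); apply: Rsum_ext => z.
rewrite (Rprod_ext (g := fun _ => 1)); first by rewrite Rprod1; ring.
by move=> y; rewrite !Rmult_1_r rf_sum.
Qed.

Lemma E1_I x : E1 (fun c => Ib (c.2 x)) = Rsum (fun z => p z * rr z x).
Proof.
have -> : E1 (fun c => Ib (c.2 x)) = E1 (fun c => Rprod (fun y => (fun _ y b => if y == x then Ib b else 1) c.1 y (c.2 y))).
  by rewrite /E1; apply: Rsum_ext => c; rewrite (Rprod_delta x (fun y => Ib (c.2 y))).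
rewrite (E1_marg (fun _ y b => if y == x then Ib b else 1)); apply: Rsum_ext => z; congr (_ * _).
rewrite -(Rprod_delta x (fun y => rr z y)); apply: Rprod_ext => y.
case: (y == x) => /=; last by rewrite !Rmult_1_r rf_sum.
rewrite rf_true; ring.
Qed.

Lemma E1_II x x' : x != x' ->
  E1 (fun c => Ib (c.2 x) * Ib (c.2 x')) = Rsum (fun z => p z * (rr z x * rr z x')).
Proof.
move=> xx.
have -> : E1 (fun c => Ib (c.2 x) * Ib (c.2 x')) = E1 (fun c => Rprod (fun y => (fun _ y b => if y == x then Ib b else if y == x' then Ib b else 1) c.1 y (c.2 y))).
  by rewrite /E1; apply: Rsum_ext => c; rewrite (Rprod_two (fun y => Ib (c.2 y)) (fun y => Ib (c.2 y)) xx).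
rewrite (E1_marg (fun _ y b => if y == x then Ib b else if y == x' then Ib b else 1)); apply: Rsum_ext => z; congr (_ * _).
rewrite -(Rprod_two (fun y => rr z y) (fun y => rr z y) xx); apply: Rprod_ext => y.
case: (y == x) => /=; first by rewrite rf_true; ring.
case: (y == x') => /=; first by rewrite rf_true; ring.
by rewrite !Rmult_1_r rf_sum.
Qed.

End Single.

Section Model.
Variable k : nat.
Variable eps : R.
Variable p : 'I_k -> R.
Hypothesis Hp : is_dist p.

Local Notation be := (bet eps).
Local Notation al := (alp eps).
Local Notation E := (E1 eps p).

Lemma p_ge0 x : 0 <= p x. Proof. by case: Hp. Qed.
Lemma p_sum : Rsum p = 1. Proof. by case: Hp. Qed.

Lemma E1_ext f g : (forall c, f c = g c) -> E f = E g.
Proof. move=> H; apply: Rsum_ext => c; by rewrite H. Qed.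

Lemma E1_add f g : E (fun c => f c + g c) = E f + E g.
Proof. rewrite /E1 -Rsum_add; apply: Rsum_ext => c; ring. Qed.

Lemma E1_sub f g : E (fun c => f c - g c) = E f - E g.
Proof. rewrite /E1 -Rsum_sub; apply: Rsum_ext => c; ring. Qed.

Lemma E1_scal a f : E (fun c => a * f c) = a * E f.
Proof. rewrite /E1 -Rsum_scal; apply: Rsum_ext => c; ring. Qed.

Lemma E1_const a : E (fun _ => a) = a.
Proof.
rewrite -(E1_ext (f := fun c => a * 1)); last by move=> c; ring.
by rewrite E1_scal E1_one p_sum; ring.
Qed.

Lemma E1_sum (I : finType) (F : I -> Om k -> R) :
  E (fun c => Rsum (fun x => F x c)) = Rsum (fun x => E (F x)).
Proof.
rewrite /E1 Rsum_swap; apply: Rsum_ext => c; by rewrite Rsum_scal.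
Qed.

Definition qq (x : 'I_k) : R := be + al * p x.

Lemma sum_rr x : Rsum (fun z => p z * rr eps z x) = qq x.
Proof.
rewrite (Rsum_ext (g := fun z => be * p z + (if z == x then al * p z else 0))); last first.
  move=> z; rewrite /rr eq_sym; case: (z == x); rewrite ?alpha_beta; ring.
by rewrite Rsum_add Rsum_scal Rsum_delta p_sum /qq; ring.
Qed.

Lemma sum_rr2 x x' : x != x' ->
  Rsum (fun z => p z * (rr eps z x * rr eps z x')) = be ^ 2 + al * be * (p x + p x').
Proof.
move=> xx.
rewrite (Rsum_ext (g := fun z => be ^ 2 * p z + (if z == x then al * be * p z else 0)
      + (if z == x' then al * be * p z else 0))); last first.
  move=> z; rewrite /rr (eq_sym x) (eq_sym x').
  case Ezx: (z == x); case Ezx': (z == x'); rewrite ?alpha_beta; try ring.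
  by move/eqP: Ezx => Q1; move/eqP: Ezx' => Q2; rewrite -Q1 -Q2 eqxx in xx.
by rewrite !Rsum_add Rsum_scal !Rsum_delta p_sum; ring.
Qed.

Definition Zf (x : 'I_k) (c : Om k) : R := Ib (c.2 x) - qq x.

Lemma E1_Ix x : E (fun c => Ib (c.2 x)) = qq x.
Proof. by rewrite E1_I sum_rr. Qed.

Lemma E1_Z x : E (Zf x) = 0.
Proof. by rewrite /Zf E1_sub E1_Ix E1_const; ring. Qed.

Definition Cv (x y : 'I_k) : R := E (fun c => Zf x c * Zf y c).

Lemma Cv_expand x y : Cv x y = E (fun c => Ib (c.2 x) * Ib (c.2 y)) - qq x * qq y.
Proof.
rewrite /Cv (E1_ext (g := fun c => (Ib (c.2 x) * Ib (c.2 y) - qq y * Ib (c.2 x)) -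
   (qq x * Ib (c.2 y) - qq x * qq y))); last by move=> c; rewrite /Zf; ring.
rewrite !E1_sub !E1_scal !E1_Ix E1_const; ring.
Qed.

Lemma Cv_off x y : x != y -> Cv x y = - al ^ 2 * p x * p y.
Proof.
move=> xy; rewrite Cv_expand E1_II // sum_rr2 // /qq; ring.
Qed.

Lemma Cv_diag x : Cv x x = qq x - qq x ^ 2.
Proof.
rewrite Cv_expand (E1_ext (g := fun c => Ib (c.2 x))); last by move=> c; rewrite Ib_sq.
rewrite E1_Ix; ring.
Qed.

End Model.

Section Bounds.
Variable eps : R.
Hypothesis Heps : 0 < eps <= 1.

Lemma exp_half_bounds : 1 + eps / 2 < exp (eps / 2) < 2.
Proof.
split; first by apply: exp_ineq1; lra.
have H1 : exp (eps / 2) * exp (eps / 2) = exp eps by rewrite -exp_plus; congr exp; field.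
have H2 : exp eps <= exp 1.
  case: (Req_dec eps 1) => [->|ne]; first lra.
  apply: Rlt_le; apply: exp_increasing; lra.
have := exp_le_3; have := exp_pos (eps/2); nra.
Qed.

Lemma bet_bounds : 0 < bet eps < 1 / 2.
Proof.
have := exp_half_bounds; rewrite /bet /beta_R => H.
split; first by apply: Rinv_0_lt_compat; lra.
apply: (Rmult_lt_reg_l (exp (eps / 2) + 1)); first lra.
rewrite Rinv_r; lra.
Qed.

Lemma alp_bounds : eps / 6 <= alp eps < 1.
Proof.
rewrite alpha_beta; have := bet_bounds; have := exp_half_bounds.
rewrite /bet /beta_R => H1 H2.
have H3 : / (exp (eps / 2) + 1) * (exp (eps / 2) + 1) = 1 by rewrite Rinv_l; lra.
split; last lra.
nra.
Qed.

End Bounds.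

Section Multi.
Variables (k n : nat) (eps : R) (p : 'I_k -> R).
Hypothesis Hp : is_dist p.
Hypothesis Heps : 0 < eps <= 1.

Local Notation be := (bet eps).
Local Notation al := (alp eps).
Local Notation E := (E1 eps p).

Definition om (o : outcome n k) (j : 'I_n) : Om k := (o.1 j, o.2 j).
Definition En (H : outcome n k -> R) : R := Rsum (fun o => outcome_prob eps p o * H o).

Lemma En_prod (G : 'I_n -> Om k -> R) :
  En (fun o => Rprod (fun j => G j (om o j))) = Rprod (fun j => E (G j)).
Proof.
rewrite (Rprod_ext (g := fun j => Rsum (fun z => Rsum (fun b : {ffun 'I_k -> bool} =>
            wt eps p (z, b) * G j (z, b))))); last by move=> j; rewrite E1_pairE.
rewrite (Rprod_sum (fun j z => Rsum (fun b : {ffun 'I_k -> bool} => wt eps p (z, b) * G j (z, b)))).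
rewrite (Rsum_ext (g := fun X : {ffun 'I_n -> 'I_k} => Rsum (fun B : {ffun 'I_n -> {ffun 'I_k -> bool}} =>
    Rprod (fun j => wt eps p (X j, B j) * G j (X j, B j))))); last first.
  move=> X; by rewrite (Rprod_sum (fun j b => wt eps p (X j, b) * G j (X j, b))).
rewrite -(Rsum_pair (fun (X : {ffun 'I_n -> 'I_k}) (B : {ffun 'I_n -> {ffun 'I_k -> bool}}) => Rprod (fun j : 'I_n => wt eps p (X j, B j) * G j (X j, B j)))).
rewrite /En; apply: Rsum_ext => o.
by rewrite /outcome_prob -Rprod_split.
Qed.


Lemma rappor_ge0 (z : 'I_k) b : 0 <= rappor_prob eps z b.
Proof.
apply: Rprod_ge0 => y; have := bet_bounds Heps; rewrite /bet; case: ifP => _; lra.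
Qed.

Lemma oprob_ge0 (o : outcome n k) : 0 <= outcome_prob eps p o.
Proof.
apply: Rprod_ge0 => j; apply: Rmult_le_pos; [exact: p_ge0 | exact: rappor_ge0].
Qed.

Lemma En_ext f g : (forall o, f o = g o) -> En f = En g.
Proof. move=> H; apply: Rsum_ext => o; by rewrite H. Qed.

Lemma En_add f g : En (fun o => f o + g o) = En f + En g.
Proof. rewrite /En -Rsum_add; apply: Rsum_ext => c; ring. Qed.

Lemma En_sub f g : En (fun o => f o - g o) = En f - En g.
Proof. rewrite /En -Rsum_sub; apply: Rsum_ext => c; ring. Qed.

Lemma En_scal a f : En (fun o => a * f o) = a * En f.
Proof. rewrite /En -Rsum_scal; apply: Rsum_ext => c; ring. Qed.

Lemma En_sum (I : finType) (F : I -> outcome n k -> R) :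
  En (fun o => Rsum (fun x => F x o)) = Rsum (fun x => En (F x)).
Proof.
rewrite /En Rsum_swap; apply: Rsum_ext => c; by rewrite Rsum_scal.
Qed.

Lemma En_le f g : (forall o, f o <= g o) -> En f <= En g.
Proof.
move=> H; apply: Rsum_le => o; apply: Rmult_le_compat_l; [exact: oprob_ge0 | exact: H].
Qed.

Lemma E1_c1 f : (forall c, f c = 1) -> E f = 1.
Proof. move=> H; rewrite (E1_ext eps p (g := fun _ => 1)) //; exact: (E1_const eps Hp). Qed.

Lemma En_one : En (fun _ => 1) = 1.
Proof.
rewrite (En_ext (g := fun o => Rprod (fun j => (fun _ _ => 1) j (om o j)))); last by move=> o; rewrite Rprod1.
rewrite (En_prod (fun _ _ => 1)) (Rprod_ext (g := fun _ => 1)) ?Rprod1 // => j.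
by apply: E1_c1.
Qed.


Definition sel (i j : 'I_n) (f : Om k -> R) (c : Om k) : R := if i == j then f c else 1.

Lemma Rprod_sel j f o : Rprod (fun i => sel i j f (om o i)) = f (om o j).
Proof. exact: (Rprod_delta j (fun i => f (om o i))). Qed.

Lemma E_sel1 i j f : E (sel i j f) = if i == j then E f else 1.
Proof.
rewrite /sel; case: (i == j) => //; exact: (E1_const eps Hp).
Qed.

Lemma En2 j l f g :
  En (fun o => f (om o j) * g (om o l)) =
  if j == l then E (fun c => f c * g c) else E f * E g.
Proof.
rewrite (En_ext (g := fun o => Rprod (fun i => (fun i c => sel i j f c * sel i l g c) i (om o i)))); last first.
  by move=> o; rewrite Rprod_split !Rprod_sel.
rewrite (En_prod (fun i c => sel i j f c * sel i l g c)).
case: eqP => [<-|/eqP jl].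
  rewrite -(Rprod_delta j (fun _ => E (fun c => f c * g c))).
  apply: Rprod_ext => i; rewrite /sel; case: (i == j) => /=; first by [].
  by apply: E1_c1 => c; ring.
rewrite -(Rprod_two (fun _ => E f) (fun _ => E g) jl).
apply: Rprod_ext => i; rewrite /sel.
case: eqP => [->|_]; first by rewrite (negbTE jl); apply: E1_ext => c; ring.
case: (i == l); first by apply: E1_ext => c; ring.
by apply: E1_c1 => c; ring.
Qed.

Lemma En4 j l j' l' f1 f2 f3 f4 :
  En (fun o => f1 (om o j) * f2 (om o l) * f3 (om o j') * f4 (om o l')) =
  Rprod (fun i => E (fun c => sel i j f1 c * sel i l f2 c * sel i j' f3 c * sel i l' f4 c)).
Proof.
rewrite -(En_prod (fun i c => sel i j f1 c * sel i l f2 c * sel i j' f3 c * sel i l' f4 c)); apply: En_ext => o.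
by rewrite !Rprod_split !Rprod_sel.
Qed.


Local Notation q := (qq eps p).
Local Notation Z := (Zf eps p).
Definition lam : R := lambda_R k eps.
Definition mu (x : 'I_k) : R := q x - lam.
Definition Zo (o : outcome n k) (j : 'I_n) (x : 'I_k) : R := Z x (om o j).
Definition Aa (c : Om k) : R := Rsum (fun x => mu x * Z x c).
Definition Ao (o : outcome n k) : R := Rsum (fun j => Aa (om o j)).
Definition Wo (o : outcome n k) : R :=
  Rsum (fun x => Rsum (fun j => Rsum (fun l => if j == l then 0 else Zo o j x * Zo o l x))).
Definition M2 : R := Rsum (fun x => mu x ^ 2).

Lemma INR_Ncount (B : {ffun 'I_n -> {ffun 'I_k -> bool}}) x :
  INR (Ncount B x) = Rsum (fun j => Ib (B j x)).
Proof.
rewrite /Ncount -sum1_card (big_morph INR plus_INR (erefl (INR 0))) /Rsum big_mkcond /=.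
by apply: eq_bigr => j _; rewrite inE; case: (B j x).
Qed.

Lemma Rsum_offdiag (f : 'I_n -> R) :
  Rsum (fun j => Rsum (fun l => if j == l then 0 else f j * f l)) =
  Rsum f * Rsum f - Rsum (fun j => f j * f j).
Proof.
rewrite Rsum_mul -Rsum_sub; apply: Rsum_ext => j.
rewrite -(Rsum_delta' j (fun l => f j * f l)) -Rsum_sub; apply: Rsum_ext => l.
case: (j == l); ring.
Qed.

Lemma Rsum_cn m c : Rsum (fun _ : 'I_m => c) = INR m * c.
Proof. by rewrite Rsum_const card_ord. Qed.

Lemma statT_decomp (o : outcome n k) :
  statT eps o.2 = INR n * (INR n - 1) * M2 + 2 * (INR n - 1) * Ao o + Wo o.
Proof.
have HN : forall x, INR (Ncount o.2 x) = Rsum (fun j => Zo o j x) + INR n * q x.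
  move=> x; rewrite INR_Ncount -(Rsum_cn n (q x)) -Rsum_add.
  by apply: Rsum_ext => j; rewrite /Zo /Zf /om /=; ring.
have HZ2 : forall x, Rsum (fun j => Zo o j x * Zo o j x) = (1 - 2 * q x) * INR (Ncount o.2 x) + INR n * q x ^ 2.
  move=> x; rewrite INR_Ncount -Rsum_scal -(Rsum_cn n (q x ^ 2)) -Rsum_add.
  apply: Rsum_ext => j; rewrite /Zo /Zf /om /=.
  have Hs := Ib_sq (o.2 j x); set b := Ib _ in Hs *.
  have -> : (b - q x) * (b - q x) = b * b - 2 * q x * b + q x * q x by ring.
  rewrite Hs; ring.
have Hx : forall x, (INR (Ncount o.2 x) - (INR n - 1) * lambda_R k eps) ^ 2 - INR (Ncount o.2 x) =
   INR n * (INR n - 1) * mu x ^ 2 + 2 * (INR n - 1) * (mu x * Rsum (fun j => Zo o j x))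
   + Rsum (fun j => Rsum (fun l => if j == l then 0 else Zo o j x * Zo o l x)) - (INR n - 1) * lam ^ 2.
  move=> x; pose f := fun j => Zo o j x.
  have HN' : INR (Ncount o.2 x) = Rsum f + INR n * q x by exact: HN.
  have HZ2' : Rsum (fun j => f j * f j) = (1 - 2 * q x) * INR (Ncount o.2 x) + INR n * q x ^ 2 by exact: HZ2.
  rewrite -/(Rsum f) (Rsum_offdiag f) HZ2' HN' /mu /lam. change (Rsum ((Zo o)^~ x)) with (Rsum f). ring.
rewrite /statT (Rsum_ext Hx) !Rsum_sub !Rsum_add Rsum_cn Rsum_scal.
rewrite /Ao /Aa /Wo /M2 -/lam.
rewrite (Rsum_swap (fun j x => mu x * Z x (om o j))).
rewrite (Rsum_ext (f := fun x => 2 * (INR n - 1) * (mu x * Rsum (fun j => Zo o j x)))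
     (g := fun x => 2 * (INR n - 1) * Rsum (fun j => mu x * Z x (om o j)))); last first.
  by move=> x; rewrite -Rsum_scal.
rewrite Rsum_scal; ring.
Qed.


Lemma p_le1 x : p x <= 1.
Proof.
rewrite -(p_sum Hp) /Rsum (bigD1 x) //=.
match goal with |- _ <= _ + ?s => have : 0 <= s end.
  apply: (big_ind (fun a => 0 <= a)); [lra | move=> *; lra | move=> i _; exact: p_ge0].
lra.
Qed.

Lemma q_bounds x : 0 <= q x <= 1.
Proof.
have := bet_bounds Heps; have := alp_bounds Heps; have := p_ge0 Hp x; have := p_le1 x.
rewrite /qq alpha_beta => *; nra.
Qed.

Lemma Cv_sq_le x y : Cv eps p x y ^ 2 <= (if y == x then 1 else 0) + p x * p y.
Proof.
have := alp_bounds Heps; have := p_ge0 Hp x; have := p_le1 x; have := p_ge0 Hp y; have := p_le1 y.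
move=> h1 h2 h3 h4 h5.
case: eqP => [->|/eqP yx].
  rewrite Cv_diag //; have := q_bounds x => hq; nra.
rewrite Cv_off //; last by rewrite eq_sym.
have hu : 0 <= p x * p y <= 1 by split; nra.
have ha : 0 <= alp eps ^ 2 <= 1 by split; nra.
set u := p x * p y in hu *; set a := alp eps ^ 2 in ha *.
have -> : (- alp eps ^ 2 * p x * p y) ^ 2 = a * a * (u * u) by rewrite /a /u; ring.
have haa : 0 <= a * a <= 1 by split; nra.
have huu : 0 <= u * u <= u by split; nra.
have : a * a * (u * u) <= 1 * (u * u) by apply: Rmult_le_compat_r; lra.
lra.
Qed.

Lemma sum_Cv_sq x : Rsum (fun y => Cv eps p x y ^ 2) <= 1 + p x.
Proof.
apply: Rle_trans (Rsum_le (Cv_sq_le x)) _.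
rewrite Rsum_add (Rsum_delta x (fun _ => 1)) Rsum_scal (p_sum Hp); lra.
Qed.

Lemma E_Aa : E Aa = 0.
Proof.
rewrite /Aa E1_sum (Rsum_ext (g := fun _ => 0)) ?Rsum0 // => x.
by rewrite E1_scal (E1_Z eps Hp); ring.
Qed.

Lemma En_A2 : En (fun o => Ao o * Ao o) = INR n * E (fun c => Aa c * Aa c).
Proof.
rewrite (En_ext (g := fun o => Rsum (fun j => Rsum (fun l => Aa (om o j) * Aa (om o l))))); last first.
  by move=> o; rewrite /Ao Rsum_mul.
rewrite En_sum (Rsum_ext (g := fun j => E (fun c => Aa c * Aa c))) ?Rsum_cn // => j.
rewrite En_sum (Rsum_ext (g := fun l => if j == l then E (fun c => Aa c * Aa c) else 0)).
  exact: (Rsum_delta' j (fun _ => E (fun c => Aa c * Aa c))).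
move=> l; rewrite En2; case: (j == l) => //; rewrite E_Aa; ring.
Qed.

Lemma E_Aa2 : E (fun c => Aa c * Aa c) <= 2 * M2.
Proof.
pose d x := q x - q x ^ 2 + alp eps ^ 2 * p x ^ 2.
have Hd : forall x, d x <= 2.
  move=> x; have := alp_bounds Heps; have := p_ge0 Hp x; have := p_le1 x; have := q_bounds x.
  rewrite /d => hq h1 h2 h3; have := Heps => he.
  have ha : 0 <= alp eps ^ 2 <= 1 by split; nra.
  have hp : 0 <= p x ^ 2 <= 1 by split; nra.
  have : alp eps ^ 2 * p x ^ 2 <= 1 * 1 by apply: Rmult_le_compat; lra.
  nra.
have HC : forall x y, Cv eps p x y = (if x == y then d x else 0) - alp eps ^ 2 * p x * p y.
  move=> x y; case: eqP => [->|/eqP xy]; first by rewrite Cv_diag // /d; ring.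
  rewrite Cv_off //; ring.
rewrite (E1_ext eps p (g := fun c => Rsum (fun x => Rsum (fun y => mu x * mu y * (Z x c * Z y c))))); last first.
  move=> c; rewrite /Aa Rsum_mul; apply: Rsum_ext => x; apply: Rsum_ext => y; ring.
rewrite E1_sum (Rsum_ext (g := fun x => Rsum (fun y => (if x == y then mu x * mu x * d x else 0)
        - alp eps ^ 2 * ((mu x * p x) * (mu y * p y))))); last first.
  move=> x; rewrite E1_sum; apply: Rsum_ext => y; rewrite E1_scal -/(Cv eps p x y) HC.
  by case: eqP => [->|_]; ring.
rewrite (Rsum_ext (g := fun x => mu x * mu x * d x - alp eps ^ 2 * ((mu x * p x) * Rsum (fun y => mu y * p y)))); last first.
  by move=> x; rewrite Rsum_sub (Rsum_delta' x (fun _ => mu x * mu x * d x)) Rsum_scal Rsum_scal.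
rewrite Rsum_sub Rsum_scal Rsum_scalr.
have H0 : 0 <= Rsum (fun x => mu x * p x) * Rsum (fun y => mu y * p y) by nra.
have H1 : 0 <= alp eps ^ 2 by nra.
have H2 : Rsum (fun x => mu x * mu x * d x) <= Rsum (fun x => 2 * mu x ^ 2).
  apply: Rsum_le => x; have := Hd x; have : 0 <= mu x * mu x by nra. nra.
rewrite Rsum_scal -/M2 in H2.
nra.
Qed.


Definition tt (x : 'I_k) (j l : 'I_n) (o : outcome n k) : R :=
  if j == l then 0 else Zo o j x * Zo o l x.

Lemma Ez0 x : E (Z x) = 0. Proof. exact: (E1_Z eps Hp). Qed.

Lemma ind_ge0 (b1 b2 : bool) : 0 <= (if b1 then 1 else 0) + (if b2 then 1 else 0).
Proof. case: b1; case: b2; lra. Qed.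

Lemma term4 x y j l j' l' :
  En (fun o => tt x j l o * tt y j' l' o) <=
  ((if (j' == j) && (l' == l) then 1 else 0) + (if (j' == l) && (l' == j) then 1 else 0)) * Cv eps p x y ^ 2.
Proof.
have Hr : 0 <= ((if (j' == j) && (l' == l) then 1 else 0) + (if (j' == l) && (l' == j) then 1 else 0)) * Cv eps p x y ^ 2.
  apply: Rmult_le_pos; last by nra.
  by case: (_ && _); case: (_ && _); lra.
rewrite /tt; case: (eqVneq j l) => [_|jl].
  rewrite (En_ext (g := fun o => 0 * 1)); last by move=> o; ring.
  rewrite En_scal; lra.
case: (eqVneq j' l') => [_|jl'].
  rewrite (En_ext (g := fun o => 0 * 1)); last by move=> o; ring.
  rewrite En_scal; lra.
rewrite (En_ext (g := fun o => Z x (om o j) * Z x (om o l) * Z y (om o j') * Z y (om o l'))); last first.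
  by move=> o; rewrite /Zo; ring.
rewrite En4.
have lj : (l == j) = false by rewrite eq_sym (negbTE jl).
have lj' : (l' == j') = false by rewrite eq_sym (negbTE jl').
case: (eqVneq j' j) => [Ej|nj].
  case: (eqVneq l' l) => [El|nl].
    subst j' l'.
    rewrite (Rprod_ext (g := fun i => if i == j then Cv eps p x y else if i == l then Cv eps p x y else 1)).
      rewrite (Rprod_two (fun _ => Cv eps p x y) (fun _ => Cv eps p x y) jl).
      rewrite /= (negbTE jl) /=; nra.
    move=> i; rewrite /sel; case: (eqVneq i j) => [->|ij].
      rewrite ?eqxx ?(negbTE jl) ?lj /=; apply: E1_ext => c; ring.
    rewrite ?(negbTE ij); case: (i == l).
      apply: E1_ext => c; ring.
    by apply: E1_c1 => c; ring.
  (* j' = j, l' <> l : factor at l' is single *)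
  subst j'.
  rewrite (Rprod_zero (j := l')); first by apply: Rmult_le_pos; [rewrite /=; repeat (case: ifP => _); lra | nra].
  rewrite /sel lj' (negbTE nl) eqxx.
  rewrite -(Ez0 y); apply: E1_ext => c; ring.
case: (eqVneq j' l) => [Ejl|njl].
  case: (eqVneq l' j) => [Elj|nlj].
    subst j' l'.
    rewrite (Rprod_ext (g := fun i => if i == j then Cv eps p x y else if i == l then Cv eps p x y else 1)).
      rewrite (Rprod_two (fun _ => Cv eps p x y) (fun _ => Cv eps p x y) jl).
      rewrite /= ?lj /=; nra.
    move=> i; rewrite /sel; case: (eqVneq i j) => [->|ij].
      rewrite ?eqxx ?(negbTE jl) ?lj /=; apply: E1_ext => c; ring.
    rewrite ?(negbTE ij); case: (i == l).
      apply: E1_ext => c; ring.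
    by apply: E1_c1 => c; ring.
  subst j'.
  case: (eqVneq l' j) => [Elj|_]; first by rewrite Elj eqxx in nlj.
  rewrite (Rprod_zero (j := j)); first by apply: Rmult_le_pos; [rewrite /=; repeat (case: ifP => _); lra | nra].
  rewrite /sel eqxx (negbTE jl).
  have -> : (j == l') = false by apply/negbTE; rewrite eq_sym.
  rewrite -(Ez0 x); apply: E1_ext => c; ring.
case: (eqVneq l' j) => [Elj|nlj].
  (* j = l', j' single *)
  subst l'.
  rewrite (Rprod_zero (j := j')); first by apply: Rmult_le_pos; [rewrite /=; repeat (case: ifP => _); lra | nra].
  rewrite /sel ?(negbTE nj) ?(negbTE njl) ?eqxx /=.
  rewrite -(Ez0 y); apply: E1_ext => c; ring.
(* j single *)
rewrite (Rprod_zero (j := j)); first by apply: Rmult_le_pos; [rewrite /=; repeat (case: ifP => _); lra | nra].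
rewrite /sel eqxx (negbTE jl).
have -> : (j == j') = false by apply/negbTE; rewrite eq_sym.
have -> : (j == l') = false by apply/negbTE; rewrite eq_sym.
rewrite -(Ez0 x); apply: E1_ext => c; ring.
Qed.


Lemma Rsum_if (T : finType) (b : bool) (f : T -> R) :
  Rsum (fun i => if b then f i else 0) = if b then Rsum f else 0.
Proof. case: b => //; exact: Rsum0. Qed.

Lemma sum_ind (j l : 'I_n) c :
  Rsum (fun j' => Rsum (fun l' => ((if (j' == j) && (l' == l) then 1 else 0)
      + (if (j' == l) && (l' == j) then 1 else 0)) * c)) = 2 * c.
Proof.
rewrite (Rsum_ext (g := fun j' : 'I_n => (if j' == j then c else 0) + (if j' == l then c else 0))).
  by rewrite Rsum_add (Rsum_delta j (fun _ => c)) (Rsum_delta l (fun _ => c)); ring.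
move=> j'.
rewrite (Rsum_ext (g := fun l' : 'I_n => (if j' == j then (if l' == l then c else 0) else 0)
      + (if j' == l then (if l' == j then c else 0) else 0))).
  rewrite Rsum_add !Rsum_if (Rsum_delta l (fun _ => c)) (Rsum_delta j (fun _ => c)) //.
move=> l'; case: (j' == j); case: (l' == l); case: (j' == l); case: (l' == j) => /=; ring.
Qed.

Lemma En_W2 : En (fun o => Wo o * Wo o) <= 2 * (INR n * INR n) * (INR k + 1).
Proof.
rewrite (En_ext (g := fun o => Rsum (fun x => Rsum (fun j => Rsum (fun l => Rsum (fun y =>
      Rsum (fun j' => Rsum (fun l' => tt x j l o * tt y j' l' o)))))))); last first.
  move=> o; have -> : Wo o = Rsum (fun x => Rsum (fun j => Rsum (fun l => tt x j l o))) by [].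
  rewrite -Rsum_scalr; apply: Rsum_ext => x; rewrite -Rsum_scalr; apply: Rsum_ext => j.
  rewrite -Rsum_scalr; apply: Rsum_ext => l; rewrite -Rsum_scal; apply: Rsum_ext => y.
  rewrite -Rsum_scal; apply: Rsum_ext => j'; rewrite -Rsum_scal; done.
apply: Rle_trans (_ : Rsum (fun x => Rsum (fun j : 'I_n => Rsum (fun l : 'I_n =>
        Rsum (fun y => 2 * Cv eps p x y ^ 2)))) <= _).
  rewrite En_sum; apply: Rsum_le => x; rewrite En_sum; apply: Rsum_le => j.
  rewrite En_sum; apply: Rsum_le => l; rewrite En_sum; apply: Rsum_le => y.
  rewrite -(sum_ind j l (Cv eps p x y ^ 2)).
  rewrite En_sum; apply: Rsum_le => j'; rewrite En_sum; apply: Rsum_le => l'.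
  exact: term4.
apply: Rle_trans (_ : Rsum (fun x => Rsum (fun j : 'I_n => Rsum (fun l : 'I_n =>
        2 * (1 + p x)))) <= _).
  apply: Rsum_le => x; apply: Rsum_le => j; apply: Rsum_le => l.
  rewrite Rsum_scal; have := sum_Cv_sq x; lra.
rewrite (Rsum_ext (g := fun x => INR n * (INR n * (2 * (1 + p x))))); last first.
  by move=> x; rewrite (Rsum_ext (g := fun _ => INR n * (2 * (1 + p x)))) ?Rsum_cn // => j; rewrite Rsum_cn.
rewrite Rsum_scal Rsum_scal Rsum_scal Rsum_add (p_sum Hp) Rsum_cn; lra.
Qed.


Lemma En_D2 : En (fun o => (statT eps o.2 - INR n * (INR n - 1) * M2) ^ 2) <=
  16 * ((INR n - 1) ^ 2 * INR n) * M2 + 4 * (INR n * INR n) * (INR k + 1).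
Proof.
have HN := pos_INR n.
apply: Rle_trans (_ : En (fun o => 8 * (INR n - 1) ^ 2 * (Ao o * Ao o) + 2 * (Wo o * Wo o)) <= _).
  apply: En_le => o; rewrite statT_decomp.
  set a := Ao o; set w := Wo o.
  have -> : INR n * (INR n - 1) * M2 + 2 * (INR n - 1) * a + w - INR n * (INR n - 1) * M2
           = 2 * (INR n - 1) * a + w by ring.
  set u := 2 * (INR n - 1) * a.
  have -> : 8 * (INR n - 1) ^ 2 * (a * a) = 2 * (u * u) by rewrite /u; ring.
  have : 0 <= (u - w) * (u - w) by apply: Rle_0_sqr.
  nra.
rewrite En_add En_scal En_scal En_A2.
have h1 := E_Aa2; have h2 := En_W2.
have h3 : 0 <= (INR n - 1) ^ 2 by apply: pow2_ge_0.
have h4 : INR n * E (fun c => Aa c * Aa c) <= INR n * (2 * M2) by apply: Rmult_le_compat_l.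
have h5 : 8 * (INR n - 1) ^ 2 * (INR n * E (fun c => Aa c * Aa c)) <= 8 * (INR n - 1) ^ 2 * (INR n * (2 * M2)).
  apply: Rmult_le_compat_l; lra.
lra.
Qed.

Lemma En_lin1 a (f : outcome n k -> R) : En (fun o => 1 - a * f o) = 1 - a * En f.
Proof. by rewrite En_sub En_one En_scal. Qed.

Lemma lb_unif gamma t : 0 < t ->
  INR n * (INR n - 1) * alp eps ^ 2 * gamma ^ 2 / INR k = t ->
  prob_says_uniform n eps gamma p >= 1 - / t ^ 2 * En (fun o => statT eps o.2 ^ 2).
Proof.
move=> ht Ht; rewrite -En_lin1 /prob_says_uniform /En; apply: Rle_ge; apply: Rsum_le => o.
have hP := oprob_ge0 o.
have hi : 0 < / t ^ 2 by apply: Rinv_0_lt_compat; nra.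
have hu : 0 <= / t ^ 2 * statT eps o.2 ^ 2 by apply: Rmult_le_pos; [lra | apply: pow2_ge_0].
have hu1 : t <= statT eps o.2 -> 1 <= / t ^ 2 * statT eps o.2 ^ 2.
  move=> h'.
  have h3 : t * t <= statT eps o.2 * statT eps o.2 by apply: Rmult_le_compat; lra.
  have : t ^ 2 <= statT eps o.2 ^ 2 by nra.
  move=> h2; rewrite -(Rinv_l (t ^ 2)); last by nra.
  apply: Rmult_le_compat_l; lra.
rewrite /test_says_uniform Ht.
set u := / t ^ 2 * statT eps o.2 ^ 2 in hu hu1 *.
set P := outcome_prob eps p o in hP *.
case: Rlt_dec => [h|h] /=; first nra.
have := hu1 (Rnot_lt_le _ _ h); nra.
Qed.

Lemma lb_nunif gamma m t : 0 < t < m ->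
  INR n * (INR n - 1) * alp eps ^ 2 * gamma ^ 2 / INR k = t ->
  prob_says_not_uniform n eps gamma p >= 1 - / (m - t) ^ 2 * En (fun o => (statT eps o.2 - m) ^ 2).
Proof.
move=> ht Ht; rewrite -En_lin1 /prob_says_not_uniform /En; apply: Rle_ge; apply: Rsum_le => o.
have hP := oprob_ge0 o.
have hi : 0 < / (m - t) ^ 2 by apply: Rinv_0_lt_compat; nra.
have hu : 0 <= / (m - t) ^ 2 * (statT eps o.2 - m) ^ 2 by apply: Rmult_le_pos; [lra | apply: pow2_ge_0].
have hu1 : statT eps o.2 < t -> 1 <= / (m - t) ^ 2 * (statT eps o.2 - m) ^ 2.
  move=> h'.
  have h3 : (m - t) * (m - t) <= (m - statT eps o.2) * (m - statT eps o.2) by apply: Rmult_le_compat; lra.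
  have : (m - t) ^ 2 <= (statT eps o.2 - m) ^ 2 by nra.
  move=> h2; rewrite -(Rinv_l ((m - t) ^ 2)); last by nra.
  apply: Rmult_le_compat_l; lra.
rewrite /test_says_uniform Ht.
set u := / (m - t) ^ 2 * (statT eps o.2 - m) ^ 2 in hu hu1 *.
set P := outcome_prob eps p o in hP *.
case: Rlt_dec => [h|h] /=; last nra.
have := hu1 h; nra.
Qed.

End Multi.

Lemma num_base (N K a g e s : R) :
  2 <= K -> 0 < g <= 1 -> 0 < e <= 1 -> e / 6 <= a < 1 -> K <= s -> s * s = K * K * K ->
  N >= 10000 * s / (g ^ 2 * e ^ 2) ->
  20000 <= N /\ 138 * s <= (N - 1) * (a ^ 2 * g ^ 2) /\ 277 * s <= N * (a ^ 2 * g ^ 2).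
Proof.
move=> hK hg he ha hs hs2 hN.
have hge : 0 < g ^ 2 * e ^ 2 by apply: Rmult_lt_0_compat; apply: pow_lt; lra.
have hge1 : g ^ 2 * e ^ 2 <= 1.
  have : g ^ 2 <= 1 by nra. have : e ^ 2 <= 1 by nra.
  have : 0 <= g ^ 2 by nra. have : 0 <= e ^ 2 by nra. nra.
have F1 : 10000 * s <= N * (g ^ 2 * e ^ 2).
  have -> : 10000 * s = 10000 * s / (g ^ 2 * e ^ 2) * (g ^ 2 * e ^ 2) by field; lra.
  apply: Rmult_le_compat_r; lra.
have F4 : 20000 <= N by nra.
have F2 : e ^ 2 / 36 <= a ^ 2 by nra.
have F3 : N * (g ^ 2 * e ^ 2) / 36 <= N * (a ^ 2 * g ^ 2).
  have : 0 <= N * g ^ 2 by apply: Rmult_le_pos; nra.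
  nra.
split; first lra.
have F5 : 277 * s <= N * (a ^ 2 * g ^ 2) by lra.
split; last lra.
have : 0 <= a ^ 2 * g ^ 2 by apply: Rmult_le_pos; apply: pow2_ge_0.
nra.
Qed.

Lemma num_unif (N K a g e s : R) :
  2 <= K -> 0 < g <= 1 -> 0 < e <= 1 -> e / 6 <= a < 1 -> K <= s -> s * s = K * K * K ->
  N >= 10000 * s / (g ^ 2 * e ^ 2) ->
  let t := N * (N - 1) * a ^ 2 * g ^ 2 / K in
  0 < t /\ / t ^ 2 * (4 * (N * N) * (K + 1)) <= 1 / 3.
Proof.
move=> hK hg he ha hs hs2 hN t.
have [F4 [F6 F5]] := num_base hK hg he ha hs hs2 hN.
set X := (N - 1) * (a ^ 2 * g ^ 2) in F6.
have hX : 0 < X by nra.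
have ht : t * K = N * X by rewrite /t /X; field; lra.
have htp : 0 < t.
  have : 0 < N * X by nra.
  nra.
split => //.
have hXX : 19044 * (s * s) <= X * X by nra.
have h12 : 12 * (K + 1) * (K * K) <= X * X by nra.
have h12' : 12 * (N * N) * (K + 1) * (K * K) <= (t * K) * (t * K).
  rewrite ht; have : 0 <= N * N by nra. nra.
have h13 : 12 * (N * N) * (K + 1) <= t * t.
  have hKK : 0 < K * K by nra.
  apply: (Rmult_le_reg_r (K * K)) => //; nra.
have hi : / t ^ 2 * (t ^ 2) = 1 by rewrite Rinv_l; nra.
have hi0 : 0 < / t ^ 2 by apply: Rinv_0_lt_compat; nra.
nra.
Qed.

Lemma num_far (N K a g e s M : R) :
  2 <= K -> 0 < g <= 1 -> 0 < e <= 1 -> e / 6 <= a < 1 -> K <= s -> s * s = K * K * K ->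
  N >= 10000 * s / (g ^ 2 * e ^ 2) -> 4 * a ^ 2 * g ^ 2 / K < M ->
  let t := N * (N - 1) * a ^ 2 * g ^ 2 / K in
  let m := N * (N - 1) * M in
  0 < t < m /\
  / (m - t) ^ 2 * (16 * ((N - 1) ^ 2 * N) * M + 4 * (N * N) * (K + 1)) <= 1 / 3.
Proof.
move=> hK hg he ha hs hs2 hN hM t m.
have [F4 [F6 F5]] := num_base hK hg he ha hs hs2 hN.
set X := (N - 1) * (a ^ 2 * g ^ 2) in F6.
have hX : 0 < X by nra.
have hKp : 0 < K by lra.
have ht : t * K = N * X by rewrite /t /X; field; lra.
have htp : 0 < t.
  have : 0 < N * X by nra.
  nra.
have hMK : 4 * X < (N - 1) * M * K.
  have h1 : 4 * a ^ 2 * g ^ 2 < M * K.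
    have -> : 4 * a ^ 2 * g ^ 2 = 4 * a ^ 2 * g ^ 2 / K * K by field; lra.
    apply: Rmult_lt_compat_r; lra.
  rewrite /X; have : 0 < N - 1 by lra. nra.
have hm : 4 * t < m.
  have : 4 * t * K < m * K by rewrite /m Rmult_assoc ht; nra.
  move=> h; apply: (Rmult_lt_reg_r K) => //.
have hmp : 0 < m by lra.
split; first lra.
have hmt : 9 / 16 * (m * m) <= (m - t) ^ 2 by nra.
have hMp : 0 < M.
  have : 0 < 4 * a ^ 2 * g ^ 2 / K by (apply: Rdiv_lt_0_compat => //; nra).
  lra.
have hNM : 1108 * K <= N * M * K.
  have : 4 * (N * (a ^ 2 * g ^ 2)) < N * M * K.
    have h1 : 4 * a ^ 2 * g ^ 2 < M * K.
      have -> : 4 * a ^ 2 * g ^ 2 = 4 * a ^ 2 * g ^ 2 / K * K by field; lra.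
      apply: Rmult_lt_compat_r; lra.
    nra.
  nra.
have hNM' : 1108 <= N * M by apply: (Rmult_le_reg_r K) => //.
have hY : 552 * s < (N - 1) * M * K by lra.
set Y := (N - 1) * M in hY hMK.
have hY0 : 0 < Y by rewrite /Y; nra.
have hYY : 304704 * (K * K * K) <= (Y * K) * (Y * K) by rewrite -hs2; nra.
have hYY' : 304704 * K <= Y * Y.
  apply: (Rmult_le_reg_r (K * K)); first nra. nra.
have T1 : 16 * ((N - 1) ^ 2 * N) * M <= 3 / 32 * (m * m).
  set Z := (N - 1) ^ 2 * N * M.
  have hZ : 0 < Z.
    have : 0 < (N - 1) ^ 2 by nra.
    rewrite /Z; nra.
  have -> : 16 * ((N - 1) ^ 2 * N) * M = 16 * Z by rewrite /Z; ring.
  have -> : m * m = (N * M) * Z by rewrite /Z /m; ring.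
  nra.
have T2 : 4 * (N * N) * (K + 1) <= 3 / 32 * (m * m).
  have -> : m * m = (N * N) * (Y * Y) by rewrite /m /Y; ring.
  have : 4 * (K + 1) <= 3 / 32 * (Y * Y) by nra.
  have : 0 < N * N by nra.
  nra.
have hsum : 16 * ((N - 1) ^ 2 * N) * M + 4 * (N * N) * (K + 1) <= 1 / 3 * (m - t) ^ 2 by nra.
have hi : / (m - t) ^ 2 * ((m - t) ^ 2) = 1 by rewrite Rinv_l; nra.
have hi0 : 0 < / (m - t) ^ 2 by apply: Rinv_0_lt_compat; nra.
nra.
Qed.

Lemma CS_sum (k : nat) (f : 'I_k -> R) :
  Rsum f * Rsum f <= INR k * Rsum (fun x => f x * f x).
Proof.
rewrite Rsum_mul.
apply: Rle_trans (_ : Rsum (fun x => Rsum (fun y => / 2 * (f x * f x) + / 2 * (f y * f y)))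
    <= _).
  apply: Rsum_le => x; apply: Rsum_le => y.
  have : 0 <= (f x - f y) * (f x - f y) by apply: Rle_0_sqr.
  lra.
rewrite (Rsum_ext (g := fun x => INR k * (/ 2 * (f x * f x)) + / 2 * Rsum (fun y => f y * f y))); last first.
  by move=> x; rewrite Rsum_add Rsum_cn Rsum_scal.
rewrite Rsum_add Rsum_scal Rsum_cn Rsum_scal; lra.
Qed.

Lemma Rpower_facts (K : R) : 2 <= K ->
  K <= Rpower K (3 / 2) /\ Rpower K (3 / 2) * Rpower K (3 / 2) = K * K * K.
Proof.
move=> hK; split.
  rewrite -{1}(Rpower_1 K); last lra.
  apply: Rle_Rpower; lra.
rewrite -Rpower_plus.
have -> : 3 / 2 + 3 / 2 = INR 3 by rewrite /=; field.
rewrite Rpower_pow; last lra.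
rewrite /=; ring.
Qed.

Theorem theorem3p1 :
  exists C : R, 0 < C /\
    forall (k : nat) (gamma eps : R) (n : nat),
      (2 <= k)%nat ->
      0 < gamma <= 1 ->
      0 < eps <= 1 ->
      INR n >= C * Rpower (INR k) (3 / 2) / (gamma ^ 2 * eps ^ 2) ->
      is_uniformity_tester n k eps gamma.
Proof.
exists 10000; split; first lra.
move=> k gamma eps n hk hg he hN p Hd.
have hK : 2 <= INR k.
  have hk' : (2 <= k)%coq_nat by apply/leP.
  have := le_INR 2 k hk'; rewrite /=; lra.
have [hs hs2] := Rpower_facts hK.
have ha := alp_bounds he.
split.
- move=> Hu.
  have [htp hrat] := num_unif hK hg he ha hs hs2 hN.
  have := @lb_unif k n eps p Hd he gamma _ htp erefl.
  have hM0 : M2 eps p = 0.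
    rewrite /M2 (Rsum_ext (g := fun _ => 0)) ?Rsum0 // => x.
    rewrite /mu /qq /lam /lambda_R Hu /unif -/(alp eps) -/(bet eps) /Rdiv; ring.
  have hD := @En_D2 k n eps p Hd he.
  rewrite hM0 in hD.
  rewrite (@En_ext k n eps p (fun o => (statT eps o.2 - INR n * (INR n - 1) * 0) ^ 2)
      (fun o => statT eps o.2 ^ 2)) in hD; last by move=> o; ring.
  set t := INR n * (INR n - 1) * alp eps ^ 2 * gamma ^ 2 / INR k in htp hrat *.
  have hi0 : 0 < / t ^ 2 by apply: Rinv_0_lt_compat; nra.
  move=> hlb.
  have : / t ^ 2 * En eps p (fun o : outcome n k => statT eps o.2 ^ 2) <=
         / t ^ 2 * (4 * (INR n * INR n) * (INR k + 1)).
    apply: Rmult_le_compat_l; lra.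
  lra.
- move=> Hfar.
  pose d x := p x - / INR k.
  have hsum : 2 * gamma < Rsum (fun x => Rabs (d x)).
    have e1 : dTV p (unif (k:=k)) = / 2 * Rsum (fun x => Rabs (d x)) by []. lra.
  have hCS := CS_sum (fun x => Rabs (d x)).
  have hsq : Rsum (fun x => Rabs (d x) * Rabs (d x)) = Rsum (fun x => d x * d x).
    apply: Rsum_ext => x; rewrite -Rabs_mult Rabs_pos_eq //; apply: Rle_0_sqr.
  rewrite hsq in hCS.
  have hD2 : 4 * gamma ^ 2 / INR k < Rsum (fun x => d x * d x).
    have h4 : 2 * gamma * (2 * gamma) < Rsum (fun x => Rabs (d x)) * Rsum (fun x => Rabs (d x)) by apply: Rmult_le_0_lt_compat; lra.
    set A1 := Rsum (fun x => Rabs (d x)) in hsum hCS h4.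
    set A2 := Rsum (fun x => d x * d x) in hCS *.
    have : 4 * gamma ^ 2 < INR k * A2 by nra.
    move=> h; have -> : 4 * gamma ^ 2 / INR k = / INR k * (4 * gamma ^ 2) by rewrite /Rdiv; ring.
    have hk0 : 0 < / INR k by apply: Rinv_0_lt_compat; lra.
    have -> : A2 = / INR k * (INR k * A2) by field; lra.
    apply: Rmult_lt_compat_l => //.
  have hM : 4 * alp eps ^ 2 * gamma ^ 2 / INR k < M2 eps p.
    have -> : M2 eps p = alp eps ^ 2 * Rsum (fun x => d x * d x).
      rewrite /M2 -Rsum_scal; apply: Rsum_ext => x.
      rewrite /mu /qq /lam /lambda_R /d -/(alp eps) -/(bet eps) /Rdiv; ring.
    have ha2 : 0 < alp eps ^ 2.
      have : 0 < alp eps by lra.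
      nra.
    have -> : 4 * alp eps ^ 2 * gamma ^ 2 / INR k = alp eps ^ 2 * (4 * gamma ^ 2 / INR k) by rewrite /Rdiv; ring.
    apply: Rmult_lt_compat_l => //.
  have [[htp htm] hrat] := num_far hK hg he ha hs hs2 hN hM.
  have := @lb_nunif k n eps p Hd he gamma _ _ (conj htp htm) erefl.
  have hD := @En_D2 k n eps p Hd he.
  set t := INR n * (INR n - 1) * alp eps ^ 2 * gamma ^ 2 / INR k in htp htm hrat *.
  set m := INR n * (INR n - 1) * M2 eps p in htm hrat hD *.
  have hi0 : 0 < / (m - t) ^ 2 by apply: Rinv_0_lt_compat; nra.
  move=> hlb.
  have : / (m - t) ^ 2 * En eps p (fun o : outcome n k => (statT eps o.2 - m) ^ 2) <=
         / (m - t) ^ 2 * (16 * ((INR n - 1) ^ 2 * INR n) * M2 eps p + 4 * (INR n * INR n) * (INR k + 1)).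
    apply: Rmult_le_compat_l; lra.
  lra.
Qed.
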